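(* With the notation below, for every $k\in\mathbb{Z}$ one has $\hat N_{k-1}\subseteq\hat N_k$ and the index $[\hat N_k:\hat N_{k-1}]$ equals $q$.
   Context: Let $F$ be a non-archimedean local field with ring of integers $\mathfrak{o}$, uniformizer $\varpi$, and finite residue field of cardinality $q$. $X=X_{PGL_2(F)}$ is the Bruhat–Tits tree of $PGL_2(F)$: vertices are homothety classes of $\mathfrak{o}$-lattices in $F^2$, with $[L],[L']$ adjacent iff there are representatives with $\varpi L\subsetneq L'\subsetneq L$; it is $(q+1)$-regular. $d$ is the path-length distance; $\mathrm{Aut}(X)$ is the group of distance-preserving bijections of the vertex set with the topology of pointwise convergence, and $PGL_2(F)\hookrightarrow\mathrm{Aut}(X)$ via the linear action on lattices. For an edge $\eta=\{y_1,y_2\}$ and $e\ge1$, $B(\eta,e)=\{y:\min(d(y,y_1),d(y,y_2))\le e\}$, and $\hat G=\hat G^{(e)}=\{g\in\mathrm{Aut}(X):\forall\eta\ \exists g'\in PGL_2(F),\ g|_{B(\eta,e)}=g'|_{B(\eta,e)}\}$ for a fixed $e\ge1$. Ends are equivalence classes of infinite paths (agreeing after an index shift from some point on); $[x,\omega]$ denotes the unique infinite path from vertex $x$ in the class $\omega$. Fix a doubly infinite path $(x_n)_{n\in\mathbb{Z}}$; let $\omega$ be the end of $(x_n)_{n\ge0}$. Set $\hat B=\{g\in\hat G: g(\omega)=\omega\}$, $\hat N=\{b\in\hat B: b(x_i)=x_i\text{ for some }i\in\mathbb{Z}\}$, and for $k\in\mathbb{Z}$, $\hat N_k=\{n\in\hat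 N: n \text{ fixes every vertex of } [x_k,\omega]\}$. *)

(* Defs.v *)
From HB Require Import structures.
From mathcomp Require Import all_boot all_order all_algebra.
Set Implicit Arguments. Unset Strict Implicit. Unset Printing Implicit Defensive.
Import Order.TTheory GRing.Theory Num.Theory.
Local Open Scope ring_scope.

Section BTTree.
Variables (F : fieldType) (v : F -> int).
(* v is the normalized discrete valuation on F^x; v 0 is irrelevant (v 0 = +oo). *)

Definition in_o (x : F) : Prop := x = 0 \/ 0 <= v x.
Definition in_m (x : F) : Prop := x = 0 \/ 0 < v x.

Definition vclose (N : int) (a b : F) : Prop := a - b = 0 \/ N <= v (a - b).

(* F is a non-archimedean local field with normalized valuation v and
   residue field of cardinality q: complete discretely valued field with
   finite residue field. *)
Definition is_local_field (q : nat) : Prop :=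
  [/\ (forall x y, x != 0 -> y != 0 -> v (x * y) = v x + v y),
      (forall x y, x != 0 -> y != 0 -> x + y != 0 ->
          Num.min (v x) (v y) <= v (x + y)),
      (exists w, w != 0 /\ v w = 1),
      (exists r : 'I_q -> F,
          [/\ (forall i, in_o (r i)),
              (forall i j, in_m (r i - r j) -> i = j) &
              (forall x, in_o x -> exists i, in_m (x - r i))]) &
      (forall u : nat -> F,
          (forall N : int, exists M : nat, forall i j : nat,
              (M <= i)%N -> (M <= j)%N -> vclose N (u i) (u j)) ->
          exists l, forall N : int, exists M : nat, forall i : nat,
              (M <= i)%N -> vclose N (u i) l)].

Definition vec := 'rV[F]_2.

Definition lattice (L : vec -> Prop) : Prop :=
  exists g : 'M[F]_2, g \in unitmx /\
    forall x, L x <-> exists u : vec, (forall i, in_o (u 0 i)) /\ x = u *m g.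

Definition scale (c : F) (L : vec -> Prop) : vec -> Prop :=
  fun x => exists y, L y /\ x = c *: y.

Definition homothetic (L L' : vec -> Prop) : Prop :=
  exists c, c != 0 /\ forall x, L' x <-> scale c L x.

Definition is_class (C : (vec -> Prop) -> Prop) : Prop :=
  exists L, lattice L /\ forall L', C L' <-> (lattice L' /\ homothetic L L').

(* vertices of the Bruhat-Tits tree: homothety classes of lattices *)
Definition vertex := {C : (vec -> Prop) -> Prop | is_class C}.

Definition strict_sub (A B : vec -> Prop) : Prop :=
  (forall z, A z -> B z) /\ exists z, B z /\ ~ A z.

Definition adj (x y : vertex) : Prop :=
  exists L L' w, [/\ sval x L, sval y L', v w = 1 /\ w != 0,
                     strict_sub (scale w L) L' & strict_sub L' L].

Inductive walk : nat -> vertex -> vertex -> Prop :=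
| walk0 x : walk 0 x x
| walkS n x y z : adj x y -> walk n y z -> walk n.+1 x z.

Definition dist (x y : vertex) (n : nat) : Prop :=
  walk n x y /\ forall m, walk m x y -> (n <= m)%N.

Definition is_aut (g : vertex -> vertex) : Prop :=
  bijective g /\ forall x y n, dist x y n <-> dist (g x) (g y) n.

(* linear action of GL_2(F) on lattices (row vectors, right action) *)
Definition mat_image (g : 'M[F]_2) (L : vec -> Prop) : vec -> Prop :=
  fun x => exists y, L y /\ x = y *m g.

Definition mat_acts (g : 'M[F]_2) (x y : vertex) : Prop :=
  forall L, sval x L -> sval y (mat_image g L).

Definition in_ball (e : nat) (y1 y2 y : vertex) : Prop :=
  exists n, (n <= e)%N /\ (dist y y1 n \/ dist y y2 n).

Definition in_Ghat (e : nat) (g : vertex -> vertex) : Prop :=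
  is_aut g /\ forall y1 y2, adj y1 y2 ->
    exists g' : 'M[F]_2, g' \in unitmx /\
      forall y, in_ball e y1 y2 y -> mat_acts g' y (g y).

Definition ray (p : nat -> vertex) : Prop :=
  forall n, adj (p n) (p n.+1) /\ p n <> p n.+2.

Definition ray_equiv (p p' : nat -> vertex) : Prop :=
  exists a b : nat, forall n, p (n + a)%N = p' (n + b)%N.

Definition dpath (xs : int -> vertex) : Prop :=
  forall n : int, adj (xs n) (xs (n + 1)) /\ xs n <> xs (n + 2).

(* representative ray of the end omega *)
Definition end_ray (xs : int -> vertex) : nat -> vertex := fun n => xs n%:Z.

Definition in_Bhat e xs (g : vertex -> vertex) : Prop :=
  in_Ghat e g /\ ray_equiv (fun n => g (end_ray xs n)) (end_ray xs).

Definition in_Nhat e xs (g : vertex -> vertex) : Prop :=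
  in_Bhat e xs g /\ exists i : int, g (xs i) = xs i.

Definition in_Nk e xs (k : int) (g : vertex -> vertex) : Prop :=
  in_Nhat e xs g /\
  forall p, ray p -> p 0%N = xs k -> ray_equiv p (end_ray xs) ->
    forall n, g (p n) = p n.

Definition in_coset (H : (vertex -> vertex) -> Prop) (a b : vertex -> vertex) :=
  exists m, H m /\ forall x, b x = a (m x).

Definition has_index (G H : (vertex -> vertex) -> Prop) (q : nat) : Prop :=
  exists h : 'I_q -> (vertex -> vertex),
    (forall i, G (h i)) /\
    forall b, G b -> exists i, in_coset H (h i) b /\
      forall j, in_coset H (h j) b -> j = i.

End BTTree.

(* Main.v *)
Require Import Defs.
From HB Require Import structures.
From mathcomp Require Import all_boot all_order all_algebra.
From mathcomp Require Import ring lra zify.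
From Stdlib Require Import ProofIrrelevance FunctionalExtensionality PropExtensionality ClassicalEpsilon Classical ClassicalDescription.
Set Implicit Arguments. Unset Strict Implicit. Unset Printing Implicit Defensive.
Import Order.TTheory GRing.Theory Num.Theory.
Local Open Scope ring_scope.

Section Mx.
Variable F : fieldType.
Notation i0 := (@ord0 1).
Notation i1 := (@ord_max 1).

Definition mx2 (a b c d : F) : 'M[F]_2 :=
  \matrix_(i, j) if i == i0 then (if j == i0 then a else b) else (if j == i0 then c else d).
Definition rv (a b : F) : 'rV[F]_2 := \row_(j < 2) if j == i0 then a else b.

Lemma ord2P (i : 'I_2) : i = i0 \/ i = i1.
Proof. case: i => [[|[|m]]] H; [left|right|]; try exact: val_inj. by []. Qed.

Lemma mx2E a b c d : [/\ mx2 a b c d i0 i0 = a, mx2 a b c d i0 i1 = b,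
   mx2 a b c d i1 i0 = c & mx2 a b c d i1 i1 = d].
Proof. by rewrite !mxE. Qed.

Lemma rvE a b : rv a b ord0 i0 = a /\ rv a b ord0 i1 = b.
Proof. by rewrite !mxE. Qed.

Lemma mx2_eta (M : 'M[F]_2) : M = mx2 (M i0 i0) (M i0 i1) (M i1 i0) (M i1 i1).
Proof.
apply/matrixP => i j; rewrite mxE.
by case: (ord2P i) => ->; case: (ord2P j) => ->.
Qed.

Lemma rv_eta (u : 'rV[F]_2) : u = rv (u ord0 i0) (u ord0 i1).
Proof.
apply/matrixP => i j; rewrite mxE.
have -> : i = ord0 by apply: val_inj; case: i => [[|]].
by case: (ord2P j) => ->.
Qed.

Lemma mx2_mul a b c d a' b' c' d' :
  mx2 a b c d *m mx2 a' b' c' d' =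
  mx2 (a*a' + b*c') (a*b' + b*d') (c*a' + d*c') (c*b' + d*d').
Proof.
apply/matrixP => i j; rewrite !mxE !big_ord_recr !big_ord0 /= !add0r !mxE.
by case: (ord2P i) => ->; case: (ord2P j) => ->.
Qed.

Lemma rv_mul a b a' b' c' d' :
  rv a b *m mx2 a' b' c' d' = rv (a*a' + b*c') (a*b' + b*d').
Proof.
apply/matrixP => i j; rewrite !mxE !big_ord_recr !big_ord0 /= !add0r !mxE.
by case: (ord2P j) => ->.
Qed.

Lemma mx2_inj a b c d a' b' c' d' :
  mx2 a b c d = mx2 a' b' c' d' -> [/\ a = a', b = b', c = c' & d = d'].
Proof.
move=> H; have := mx2E a b c d; rewrite H; by case: (mx2E a' b' c' d') => -> -> -> -> [].
Qed.

Lemma rv_inj a b a' b' : rv a b = rv a' b' -> a = a' /\ b = b'.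
Proof. move=> H; have := rvE a b; rewrite H; by case: (rvE a' b') => -> -> []. Qed.

Lemma mx2_scale k a b c d : k *: mx2 a b c d = mx2 (k*a) (k*b) (k*c) (k*d).
Proof. apply/matrixP => i j; rewrite !mxE; by case: (ord2P i) => ->; case: (ord2P j) => ->. Qed.

Lemma rv_scale k a b : k *: rv a b = rv (k*a) (k*b).
Proof. apply/matrixP => i j; rewrite !mxE; by case: (ord2P j) => ->. Qed.

Lemma rv_add a b a' b' : rv a b + rv a' b' = rv (a+a') (b+b').
Proof. apply/matrixP => i j; rewrite !mxE; by case: (ord2P j) => ->. Qed.

Lemma mx2_1 : (1%:M : 'M[F]_2) = mx2 1 0 0 1.
Proof. apply/matrixP => i j; rewrite !mxE; by case: (ord2P i) => ->; case: (ord2P j) => ->. Qed.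



Lemma rv0 a b : rv a b ord0 i0 = a. Proof. by rewrite !mxE. Qed.
Lemma rv1 a b : rv a b ord0 i1 = b. Proof. by rewrite !mxE. Qed.
Lemma mx00 a b c d : mx2 a b c d i0 i0 = a. Proof. by rewrite !mxE. Qed.
Lemma mx01 a b c d : mx2 a b c d i0 i1 = b. Proof. by rewrite !mxE. Qed.
Lemma mx10 a b c d : mx2 a b c d i1 i0 = c. Proof. by rewrite !mxE. Qed.
Lemma mx11 a b c d : mx2 a b c d i1 i1 = d. Proof. by rewrite !mxE. Qed.
Definition mxE2 := (mx00, mx01, mx10, mx11, rv0, rv1).
End Mx.

Section Val.
Variables (F : fieldType) (v : F -> int).
Hypothesis vM : forall x y, x != 0 -> y != 0 -> v (x * y) = v x + v y.
Hypothesis vU : forall x y, x != 0 -> y != 0 -> x + y != 0 ->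
          Num.min (v x) (v y) <= v (x + y).
Variable pi : F.
Hypothesis pi0 : pi != 0.
Hypothesis vpi : v pi = 1.

Notation o := (in_o v).
Notation m := (in_m v).

Lemma v1 : v 1 = 0.
Proof.
have h1 : forall a : int, a = a + a -> a = 0 by move=> a; lia.
apply: h1; have := vM (oner_neq0 F) (oner_neq0 F); by rewrite mulr1.
Qed.

Lemma vN1 : v (-1) = 0.
Proof.
have h : (-1 : F) != 0 by rewrite oppr_eq0 oner_neq0.
have := vM h h; rewrite mulrNN mulr1 v1 => H; lia.
Qed.

Lemma vN x : x != 0 -> v (- x) = v x.
Proof.
move=> x0; have h : (-1 : F) != 0 by rewrite oppr_eq0 oner_neq0.
by rewrite -mulN1r vM // vN1 add0r.
Qed.

Lemma vV x : x != 0 -> v x^-1 = - v x.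
Proof.
move=> x0; have h : x^-1 != 0 by rewrite invr_eq0.
have := vM x0 h; rewrite mulfV // v1 => H; lia.
Qed.

Lemma o0 : o 0. Proof. by left. Qed.
Lemma o1 : o 1. Proof. by right; rewrite v1. Qed.

Lemma oM x y : o x -> o y -> o (x * y).
Proof.
case: (eqVneq x 0) => [->|x0]; first by rewrite mul0r => _ _; left.
case: (eqVneq y 0) => [->|y0]; first by rewrite mulr0 => _ _; left.
move=> [/eqP|hx]; first by rewrite (negbTE x0).
move=> [/eqP|hy]; first by rewrite (negbTE y0).
right; rewrite vM //; lia.
Qed.

Lemma oN x : o x -> o (- x).
Proof.
case: (eqVneq x 0) => [->|x0]; first by rewrite oppr0 => _; left.
move=> [/eqP|hx]; first by rewrite (negbTE x0).
by right; rewrite vN.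
Qed.

Lemma oD x y : o x -> o y -> o (x + y).
Proof.
case: (eqVneq x 0) => [->|x0]; first by rewrite add0r.
case: (eqVneq y 0) => [->|y0]; first by rewrite addr0.
case: (eqVneq (x + y) 0) => [->|s0]; first by left.
move=> [/eqP|hx]; first by rewrite (negbTE x0).
move=> [/eqP|hy]; first by rewrite (negbTE y0).
right; have := vU x0 y0 s0; rewrite /Num.min.
by case: ifP => _ h; [exact: (le_trans hx h)|exact: (le_trans hy h)].
Qed.

Lemma oB x y : o x -> o y -> o (x - y).
Proof. by move=> hx hy; apply: oD => //; apply: oN. Qed.

Lemma opi : o pi. Proof. by right; rewrite vpi. Qed.

Lemma oX n : o (pi ^+ n).
Proof. elim: n => [|n IH]; first by rewrite expr0; apply: o1. by rewrite exprS; apply: oM => //; apply: opi. Qed.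

Lemma not_opiV : ~ o pi^-1.
Proof.
case => [/eqP|]; first by rewrite invr_eq0 (negbTE pi0).
by rewrite vV // vpi.
Qed.

Lemma m_o x : m x <-> o (x / pi).
Proof.
case: (eqVneq x 0) => [->|x0]; first by rewrite mul0r; split => _; left.
have h : pi^-1 != 0 by rewrite invr_eq0.
have xp : x / pi != 0 by rewrite mulf_neq0.
rewrite /in_m /in_o vM // vV // vpi; split.
  by case => [/eqP|]; [rewrite (negbTE x0)| move=> H; right; lia].
by case => [/eqP|]; [rewrite (negbTE xp)| move=> H; right; lia].
Qed.

Lemma m_o' x : m x -> o x.
Proof. case => [->|h]; first by left. by right; apply: ltW. Qed.

Lemma mMo x y : m x -> o y -> m (x * y).
Proof.
move/m_o=> hx hy; apply/m_o.
by rewrite mulrAC; apply: oM.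
Qed.

Lemma mD x y : m x -> m y -> m (x + y).
Proof. move=> /m_o hx /m_o hy; apply/m_o; rewrite mulrDl; exact: oD. Qed.

Lemma mN x : m x -> m (- x).
Proof. move=> /m_o hx; apply/m_o; rewrite mulNr; exact: oN. Qed.

Lemma mB x y : m x -> m y -> m (x - y).
Proof. by move=> hx hy; apply: mD => //; apply: mN. Qed.

Lemma m0 : m 0. Proof. by left. Qed.

Lemma mpi : m pi. Proof. by right; rewrite vpi. Qed.

Lemma unitP x : o x -> ~ m x -> x != 0 /\ o x^-1.
Proof.
move=> hx hm; have x0 : x != 0 by apply/eqP => h; apply: hm; left.
split => //; case: hx => [/eqP|hx]; first by rewrite (negbTE x0).
right; rewrite vV //; have : ~ (0 < v x) by move=> h; apply: hm; right.
lia.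
Qed.

Lemma unit_notm x : x != 0 -> o x -> o x^-1 -> ~ m x.
Proof.
move=> x0 h1 h2 [/eqP|h]; first by rewrite (negbTE x0).
case: h2 => [/eqP|]; first by rewrite invr_eq0 (negbTE x0).
rewrite vV //; lia.
Qed.

Lemma mX n : (0 < n)%N -> m (pi ^+ n).
Proof. case: n => // n _; rewrite exprS; apply: mMo; [exact: mpi|exact: oX]. Qed.

Lemma vX n : v (pi ^+ n) = n%:Z.
Proof.
elim: n => [|n IH]; first by rewrite expr0 v1.
rewrite exprS vM ?expf_neq0 // IH vpi; lia.
Qed.

Lemma oXV_vclose n a b : o ((a - b) / pi ^+ n) -> vclose v n%:Z a b.
Proof.
rewrite /vclose.
have pn : pi ^+ n != 0 by rewrite expf_neq0.
case: (eqVneq (a - b) 0) => [->|d0]; first by left.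
case => [/eqP|h]; first by rewrite mulf_eq0 invr_eq0 (negbTE pn) (negbTE d0).
right; move: h; rewrite vM ?invr_eq0 // vV // vX; by rewrite subr_ge0.
Qed.

Lemma vclose_oXV n a b : vclose v n%:Z a b -> o ((a - b) / pi ^+ n).
Proof.
rewrite /vclose.
have pn : pi ^+ n != 0 by rewrite expf_neq0.
case: (eqVneq (a - b) 0) => [->|d0]; first by rewrite mul0r; left.
case => [/eqP|h]; first by rewrite (negbTE d0).
right; rewrite vM ?invr_eq0 // vV // vX; lia.
Qed.

Notation i0 := (@ord0 1).
Notation i1 := (@ord_max 1).
Notation vertex := (vertex v).

Definition introw (u : 'rV[F]_2) := forall i, o (u 0 i).
Definition intm (M : 'M[F]_2) := forall i j, o (M i j).
Definition Lat (P : 'M[F]_2) : vec F -> Prop := fun x => exists u, introw u /\ x = u *m P.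

Lemma introw_rv a b : introw (rv a b) <-> o a /\ o b.
Proof.
split; first by move=> h; case: (rvE a b) => h1 h2; split; [rewrite -h1|rewrite -h2]; apply: h.
case=> ha hb i; rewrite !mxE; by case: (ord2P i) => ->.
Qed.

Lemma intm_mx2 a b c d : intm (mx2 a b c d) <-> [/\ o a, o b, o c & o d].
Proof.
split; first by move=> h; case: (mx2E a b c d) => h1 h2 h3 h4; split;
  [rewrite -h1|rewrite -h2|rewrite -h3|rewrite -h4]; apply: h.
case=> ha hb hc hd i j; rewrite !mxE; by case: (ord2P i) => ->; case: (ord2P j) => ->.
Qed.

Lemma introw_mul u M : introw u -> intm M -> introw (u *m M).
Proof.
rewrite (rv_eta u) (mx2_eta M) rv_mul => /introw_rv [h1 h2] /intm_mx2 [h3 h4 h5 h6].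
apply/introw_rv; split; apply: oD; apply: oM => //.
Qed.

Lemma intm_mul A B : intm A -> intm B -> intm (A *m B).
Proof.
rewrite (mx2_eta A) (mx2_eta B) mx2_mul => /intm_mx2 [h1 h2 h3 h4] /intm_mx2 [h5 h6 h7 h8].
apply/intm_mx2; split; apply: oD; apply: oM => //.
Qed.

Lemma intm1 : intm 1%:M.
Proof. rewrite mx2_1; apply/intm_mx2; split; (apply: o0 || apply: o1). Qed.

Lemma lattice_Lat P : P \in unitmx -> lattice v (Lat P).
Proof. by move=> hP; exists P; split. Qed.

Lemma lattice_ext (L L' : vec F -> Prop) : lattice v L -> (forall z, L z <-> L' z) -> lattice v L'.
Proof. case=> P [hP h] e; exists P; split => // x; rewrite -e; exact: h. Qed.

Lemma scale_Lat c P x : scale c (Lat P) x <-> Lat (c *: P) x.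
Proof.
split.
  by case=> y [[u [hu ->]] ->]; exists u; split => //; rewrite scalemxAr.
by case=> u [hu ->]; exists (u *m P); split; [exists u|rewrite scalemxAr].
Qed.

Lemma Lat_sub P Q : (forall z, Lat P z -> Lat Q z) <-> exists U, intm U /\ P = U *m Q.
Proof.
split; last first.
  case=> U [hU ->] z [u [hu ->]]; exists (u *m U); split; last by rewrite mulmxA.
  exact: introw_mul.
move=> h.
have [u0 [h0 e0]] : Lat Q (rv 1 0 *m P).
  apply: h; exists (rv 1 0); split => //; apply/introw_rv; split; [exact: o1|exact: o0].
have [u1 [h1 e1]] : Lat Q (rv 0 1 *m P).
  apply: h; exists (rv 0 1); split => //; apply/introw_rv; split; [exact: o0|exact: o1].
exists (mx2 (u0 0 i0) (u0 0 i1) (u1 0 i0) (u1 0 i1)); split.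
  apply/intm_mx2; split; [exact: h0|exact: h0|exact: h1|exact: h1].
move: e0 e1; rewrite (mx2_eta P) (mx2_eta Q) (rv_eta u0) (rv_eta u1) !rv_mul mx2_mul !mxE2.
move=> /rv_inj [<- <-] /rv_inj [<- <-].
by rewrite !mul1r !mul0r !addr0 !add0r.
Qed.

Lemma homothetic_ext1 (A A' B : vec F -> Prop) : (forall z, A z <-> A' z) -> homothetic A B -> homothetic A' B.
Proof.
move=> e [c [c0 h]]; exists c; split => // x; rewrite h.
by split; case=> y [hy ->]; exists y; split => //; apply/e.
Qed.

Lemma homothetic_ext2 (A B B' : vec F -> Prop) : (forall z, B z <-> B' z) -> homothetic A B -> homothetic A B'.
Proof. move=> e [c [c0 h]]; exists c; split => // x; by rewrite -e. Qed.

Lemma homothetic_refl (A : vec F -> Prop) : homothetic A A.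
Proof.
exists 1; split; first exact: oner_neq0.
by move=> x; split; [move=> h; exists x; rewrite scale1r|case=> y [hy ->]; rewrite scale1r].
Qed.

Lemma homothetic_sym (A B : vec F -> Prop) : homothetic A B -> homothetic B A.
Proof.
case=> c [c0 h]; exists c^-1; split; first by rewrite invr_eq0.
move=> x; split.
  move=> hx; exists (c *: x); split; last by rewrite scalerA mulVf // scale1r.
  by apply/h; exists x.
by case=> y [/h [z [hz ->]] ->]; rewrite scalerA mulVf // scale1r.
Qed.

Lemma homothetic_trans (A B C : vec F -> Prop) : homothetic A B -> homothetic B C -> homothetic A C.
Proof.
case=> c [c0 h] [d [d0 h']]; exists (d * c); split; first by rewrite mulf_neq0.
move=> x; rewrite h'; split.
  by case=> y [/h [z [hz ->]] ->]; exists z; rewrite scalerA.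
by case=> y [hy ->]; exists (c *: y); split; [apply/h; exists y|rewrite scalerA].
Qed.

Definition CL (P : 'M[F]_2) : (vec F -> Prop) -> Prop :=
  fun L => lattice v L /\ homothetic (Lat P) L.

Lemma is_class_CL P : P \in unitmx -> is_class v (CL P).
Proof. move=> hP; exists (Lat P); split; [exact: lattice_Lat|by []]. Qed.

Definition cls1 : vertex := exist _ (CL 1%:M) (is_class_CL (unitmx1 _ _)).

Definition cls (P : 'M[F]_2) : vertex :=
  match excluded_middle_informative (is_class v (CL P)) with
  | left h => exist _ (CL P) h
  | right _ => cls1
  end.

Lemma cls_val P : P \in unitmx -> sval (cls P) = CL P.
Proof.
move=> hP; rewrite /cls; case: excluded_middle_informative => // h.
by case: h; exact: is_class_CL.
Qed.

Lemma vertex_eq (x y : vertex) : (forall L, sval x L <-> sval y L) -> x = y.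
Proof.
case: x => [C1 h1]; case: y => [C2 h2] /= e.
have E : C1 = C2 by apply: functional_extensionality => L; apply: propositional_extensionality.
subst C2; f_equal; exact: proof_irrelevance.
Qed.

Lemma cls_eq_hom P Q : P \in unitmx -> Q \in unitmx ->
  (cls P = cls Q <-> homothetic (Lat P) (Lat Q)).
Proof.
move=> hP hQ; split.
  move=> e; have : sval (cls Q) (Lat Q).
    by rewrite cls_val //; split; [exact: lattice_Lat|exact: homothetic_refl].
  by rewrite -e cls_val // => -[].
move=> h; apply: vertex_eq => L; rewrite !cls_val //; split; case=> hL hh; split => //.
  exact: homothetic_trans (homothetic_sym h) hh.
exact: homothetic_trans h hh.
Qed.

Lemma cls_eqP P Q : P \in unitmx -> Q \in unitmx ->
  (cls P = cls Q <-> exists c, c != 0 /\ exists U V, [/\ intm U, intm V,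
      Q = U *m (c *: P) & c *: P = V *m Q]).
Proof.
move=> hP hQ; rewrite cls_eq_hom //; split.
  case=> c [c0 h]; exists c; split => //.
  have [U [hU eU]] : exists U, intm U /\ Q = U *m (c *: P).
    by apply/Lat_sub => z /h /scale_Lat.
  have [V [hV eV]] : exists V, intm V /\ c *: P = V *m Q.
    by apply/Lat_sub => z /scale_Lat /h.
  by exists U, V.
case=> c [c0 [U [V [hU hV eU eV]]]]; exists c; split => //.
have h1 : forall x, Lat Q x -> Lat (c *: P) x by apply/Lat_sub; exists U.
have h2 : forall x, Lat (c *: P) x -> Lat Q x by apply/Lat_sub; exists V.
move=> x; rewrite scale_Lat; split; [exact: h1|exact: h2].
Qed.

Lemma vertex_cls (x : vertex) L : sval x L ->
  exists P, [/\ P \in unitmx, (forall z, L z <-> Lat P z) & x = cls P].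
Proof.
case: x => C [L0 [hL0 hC]] /= hL.
have [hLl hh] := (proj1 (hC L) hL).
case: (hLl) => P [hP eP]; exists P; split => //.
apply: vertex_eq => L'; rewrite cls_val //= hC; split; case=> h1 h2; split => //.
  apply: homothetic_trans h2; apply: homothetic_sym; apply: homothetic_ext2 hh; exact: eP.
apply: homothetic_trans h2; apply: homothetic_ext2 hh; move=> z; rewrite eP; by [].
Qed.

Lemma vertex_ex (x : vertex) : exists P, P \in unitmx /\ x = cls P.
Proof.
have [L0 [hL0 hC]] := svalP x.
have hx : sval x L0 by apply/hC; split => //; exact: homothetic_refl.
by have [P [hP _ ->]] := vertex_cls hx; exists P.
Qed.

Lemma vertex_cls' (x : vertex) L : sval x L -> lattice v L /\ (forall L', sval x L' <-> lattice v L' /\ homothetic L L').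
Proof.
case: x => C [L0 [hL0 hC]] /= hL; have [h1 h2] := proj1 (hC L) hL; split => // L'.
rewrite hC; split; case=> a b; split => //.
  exact: homothetic_trans (homothetic_sym h2) b.
exact: homothetic_trans h2 b.
Qed.

Lemma sval_ext (x : vertex) L L' : sval x L -> (forall z, L z <-> L' z) -> sval x L'.
Proof.
move=> hL e; have [h1 h2] := vertex_cls' hL; apply/h2; split.
  exact: lattice_ext e.
by apply: (homothetic_ext2 e); [exact: homothetic_refl].
Qed.

Lemma sval_scale (x : vertex) L c : c != 0 -> sval x L -> sval x (scale c L).
Proof.
move=> c0 hL; have [h1 h2] := vertex_cls' hL; apply/h2; split; last by exists c.
case: h1 => P [hP e]; exists (c *: P); split; first by rewrite unitmxZ ?unitfE.
move=> z; change (scale c L z <-> Lat (c *: P) z); rewrite -scale_Lat; split; case=> y [hy ->]; exists y; split => //; by apply/e.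
Qed.

Lemma sval_cls P : P \in unitmx -> sval (cls P) (Lat P).
Proof. by move=> hP; rewrite cls_val //; split; [exact: lattice_Lat|exact: homothetic_refl]. Qed.

Lemma mulmx_cancel (A B P : 'M[F]_2) : P \in unitmx -> A *m P = B *m P -> A = B.
Proof. by move=> hP e; rewrite -(mulmxK hP A) e mulmxK. Qed.

Lemma cls_eqM (M N P : 'M[F]_2) : M \in unitmx -> N \in unitmx -> P \in unitmx ->
  cls (M *m P) = cls (N *m P) ->
  exists c, c != 0 /\ exists U V, [/\ intm U, intm V, N = U *m (c *: M) & c *: M = V *m N].
Proof.
move=> hM hN hP /cls_eqP; rewrite !unitmx_mul hM hN hP => /(_ isT isT) [c [c0 [U [V [hU hV e1 e2]]]]].
exists c; split => //; exists U, V; split => //.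
  by apply: (mulmx_cancel hP); rewrite e1 -!mulmxA scalemxAl.
by apply: (mulmx_cancel hP); rewrite -mulmxA -e2 scalemxAl.
Qed.

Lemma cls_unimod (U W P : 'M[F]_2) : intm U -> intm W -> W *m U = 1%:M -> P \in unitmx ->
  cls (U *m P) = cls P.
Proof.
move=> hU hW e hP; have [hW' hU'] := mulmx1_unit e.
apply/cls_eqP; rewrite ?unitmx_mul ?hU' //.
exists 1; split; first exact: oner_neq0.
exists W, U; split => //; by rewrite scale1r // mulmxA e mul1mx.
Qed.

Lemma cls_scale c (P : 'M[F]_2) : c != 0 -> P \in unitmx -> cls (c *: P) = cls P.
Proof.
move=> c0 hP; apply/esym/cls_eqP => //; first by rewrite unitmxZ ?unitfE.
exists c; split => //; exists 1%:M, 1%:M; split; try exact: intm1; by rewrite mul1mx.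
Qed.

Lemma cls_unit_mx2 a b c d (P : 'M[F]_2) : (a * d - b * c) != 0 -> P \in unitmx -> mx2 a b c d *m P \in unitmx.
Proof.
move=> h hP; rewrite unitmx_mul hP andbT.
have := @mulmx1_unit _ _ (mx2 a b c d) ((a * d - b * c)^-1 *: mx2 d (-b) (-c) a).
rewrite -scalemxAr mx2_mul mx2_scale mx2_1.
set k := (a * d - b * c)^-1.
have -> : mx2 (k * (a * d + b * - c)) (k * (a * - b + b * a)) (k * (c * d + d * - c)) (k * (c * - b + d * a)) = mx2 1 0 0 1.
  congr mx2; rewrite /k; field; done.
by move=> /(_ erefl) [].
Qed.


Section Core.
Variable T : F -> F -> Prop.
Hypothesis Tadd : forall a b c d, T a b -> T c d -> T (a + c) (b + d).
Hypothesis Tsc : forall al a b, o al -> T a b -> T (al * a) (al * b).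
Hypothesis Tint : forall a b, T a b -> o a /\ o b.
Hypothesis Tpi : forall a b, o a -> o b -> T (pi * a) (pi * b).
Hypothesis Tnot : exists a b, [/\ o a, o b & ~ T a b].
Hypothesis Tyes : exists a b, T a b /\ ~ (m a /\ m b).

Lemma Tall : T 1 0 -> T 0 1 -> False.
Proof.
move=> h1 h2; case: Tnot => a [b [ha hb hn]]; apply: hn.
have := Tadd (Tsc ha h1) (Tsc hb h2); by rewrite !mulr1 !mulr0 addr0 add0r.
Qed.

Lemma TN a b : T a b -> T (- a) (- b).
Proof. move=> h; have := Tsc (oN o1) h; by rewrite !mulN1r. Qed.

Lemma Tm a b : m a -> m b -> T a b.
Proof.
move=> /m_o ha /m_o hb; have := Tpi ha hb.
by rewrite ![pi * (_ / pi)]mulrC -!mulrA mulVf // !mulr1.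
Qed.

Lemma core : (forall a b, T a b <-> o a /\ m b) \/
   exists t, o t /\ forall a b, T a b <-> (o b /\ m (a - b * t)).
Proof.
case: Tyes => a0 [b0 [h0 hn]]; have [oa0 ob0] := Tint h0.
case: (classic (m b0)) => mb0.
  have ma0 : ~ m a0 by move=> h; apply: hn.
  have [a00 oia] := unitP oa0 ma0.
  have T10 : T 1 0.
    have h1 := Tsc oia h0; rewrite mulVf // in h1.
    have h2 : T 0 (- (a0^-1 * b0)) by apply: Tm; [exact: m0|apply: mN; rewrite mulrC; exact: mMo].
    by have := Tadd h1 h2; rewrite addr0 subrr.
  left => a b; split.
    move=> h; have [oa ob] := Tint h; split => //.
    case: (classic (m b)) => // mb; exfalso.
    have [b00 oib] := unitP ob mb.
    have h2 : T 0 b by have := Tadd h (TN (Tsc oa T10)); rewrite mulr1 mulr0 subrr oppr0 addr0.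
    have := Tsc oib h2; rewrite mulr0 mulVf // => h3; exact: Tall T10 h3.
  case=> oa mb; have := Tadd (Tsc oa T10) (Tm m0 mb); by rewrite mulr1 mulr0 addr0 add0r.
have [b00 oib] := unitP ob0 mb0.
right; exists (a0 / b0); split; first by apply: oM.
have Tt1 : T (a0 / b0) 1 by have := Tsc oib h0; rewrite mulVf // mulrC.
move=> a b; split.
  move=> h; have [oa ob] := Tint h; split => //.
  case: (classic (m (a - b * (a0 / b0)))) => // md; exfalso.
  have od : o (a - b * (a0 / b0)) by apply: oB => //; apply: oM => //; apply: oM.
  have [d0 oid] := unitP od md.
  have h2 : T (a - b * (a0 / b0)) 0.
    by have := Tadd h (TN (Tsc ob Tt1)); rewrite mulr1 subrr.
  have T10 : T 1 0 by have := Tsc oid h2; rewrite mulr0 mulVf.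
  have T01 : T 0 1.
    have := Tadd Tt1 (TN (Tsc (oM oa0 oib) T10)); by rewrite mulr1 mulr0 subrr oppr0 addr0.
  exact: Tall T10 T01.
case=> ob md; have := Tadd (Tsc ob Tt1) (Tm md m0).
by rewrite mulr1 addr0 mulrC addrC subrK.
Qed.
End Core.


Definition D (n : nat) : 'M[F]_2 := mx2 1 0 0 (pi ^+ n).
Definition At (t : F) : 'M[F]_2 := mx2 pi 0 t 1.

Lemma D_unit n (P : 'M[F]_2) : P \in unitmx -> D n *m P \in unitmx.
Proof. move=> hP; apply: cls_unit_mx2 => //; rewrite mul1r mul0r subr0; exact: expf_neq0. Qed.

Lemma At_unit t (P : 'M[F]_2) : P \in unitmx -> At t *m P \in unitmx.
Proof. move=> hP; apply: cls_unit_mx2 => //; by rewrite mulr1 mul0r subr0. Qed.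

Lemma Lat_rv P z : Lat P z <-> exists a b, [/\ o a, o b & z = rv a b *m P].
Proof.
split; first by case=> u [hu ->]; exists (u 0 i0), (u 0 i1); split => //; rewrite -rv_eta.
by case=> a [b [ha hb ->]]; exists (rv a b); split => //; apply/introw_rv.
Qed.

Lemma rv_cancel (P : 'M[F]_2) a b c d : P \in unitmx -> rv a b *m P = rv c d *m P -> a = c /\ b = d.
Proof. by move=> hP e; apply: rv_inj; rewrite -(mulmxK hP (rv a b)) e mulmxK. Qed.

Lemma o_piw w : v w = 1 -> w != 0 -> o (pi / w).
Proof. move=> vw w0; right; rewrite vM ?invr_eq0 // vV // vw vpi; lia. Qed.

Lemma cls_of_Lat (y : vertex) L Q : sval y L -> (forall z, L z <-> Lat Q z) -> Q \in unitmx -> y = cls Q.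
Proof.
move=> hL e hQ; have [P [hP eP ->]] := vertex_cls hL.
apply/cls_eq_hom => //; apply: (homothetic_ext2 (B := Lat P)); last exact: homothetic_refl.
by move=> z; rewrite -eP e.
Qed.

Lemma adj_class (g : 'M[F]_2) (y : vertex) : g \in unitmx -> adj (cls g) y ->
  y = cls (D 1 *m g) \/ exists t, o t /\ y = cls (At t *m g).
Proof.
move=> hg [L [L' [w [hL hL' [vw w0] [s1 [z1 [h1 h1']]] [s2 [z2 [h2 h2']]]]]]].
move: hL; rewrite cls_val // => -[_ [c [c0 eL]]].
set g' := c *: g.
have hg' : g' \in unitmx by rewrite unitmxZ ?unitfE.
have eL' : forall z, L z <-> Lat g' z by move=> z; rewrite eL scale_Lat.
have [P [hP eP ey]] := vertex_cls hL'.
pose T a b := L' (rv a b *m g').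
have Tadd : forall a b c d, T a b -> T c d -> T (a + c) (b + d).
  move=> a b c' d; rewrite /T !eP => -[u1 [hu1 e1]] [u2 [hu2 e2]].
  exists (u1 + u2); split; first by move=> i; rewrite mxE; apply: oD.
  by rewrite -rv_add mulmxDl e1 e2 mulmxDl.
have Tsc : forall al a b, o al -> T a b -> T (al * a) (al * b).
  move=> al a b hal; rewrite /T !eP => -[u1 [hu1 e1]].
  exists (al *: u1); split; first by move=> i; rewrite mxE; apply: oM.
  by rewrite -rv_scale -!scalemxAl e1.
have Tint : forall a b, T a b -> o a /\ o b.
  move=> a b /s2 /eL' /Lat_rv [a' [b' [ha hb /rv_cancel]]] /(_ hg') [-> ->]; by split.
have Tpi : forall a b, o a -> o b -> T (pi * a) (pi * b).
  move=> a b ha hb; apply: s1; exists (rv (pi / w * a) (pi / w * b) *m g'); split.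
    by apply/eL'/Lat_rv; exists (pi / w * a), (pi / w * b); split => //; apply: oM => //; apply: o_piw.
  rewrite scalemxAl rv_scale; congr (rv _ _ *m _); field; by rewrite w0.
have Tnot : exists a b, [/\ o a, o b & ~ T a b].
  move: h2 h2' => /eL' /Lat_rv [a [b [ha hb ->]]] hn; by exists a, b.
have Tyes : exists a b, T a b /\ ~ (m a /\ m b).
  have := s2 _ h1 => /eL' /Lat_rv [a [b [ha hb e]]].
  exists a, b; split; first by rewrite /T -e.
  case=> /m_o ma /m_o mb; apply: h1'; rewrite e.
  exists (rv (a / pi * (pi / w)) (b / pi * (pi / w)) *m g'); split.
    by apply/eL'/Lat_rv; do 2 eexists; split; last reflexivity; apply: oM => //; apply: o_piw.
  rewrite scalemxAl rv_scale; congr (rv _ _ *m _); field; by rewrite pi0 w0.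
have gc : forall M : 'M[F]_2, M *m g \in unitmx -> cls (M *m g') = cls (M *m g).
  move=> M hM; rewrite /g' -scalemxAr; exact: cls_scale.
have LT : forall z, L' z <-> exists a b, T a b /\ z = rv a b *m g'.
  move=> z; split; last by case=> a [b [h ->]].
  move=> hz; have := s2 _ hz => /eL' /Lat_rv [a [b [ha hb e]]].
  by exists a, b; split => //; rewrite /T -e.
case: (core Tadd Tsc Tint Tpi Tnot Tyes) => [hT|[t [ot hT]]]; [left|right].
  rewrite -(gc _ (D_unit 1 hg)); apply: (cls_of_Lat hL'); last exact: D_unit.
  move=> z; rewrite LT Lat_rv; split.
    case=> a [b [/hT [ha hb] ->]]; exists a, (b / pi); split => //; first by apply/m_o.
    by rewrite mulmxA /D rv_mul; congr (rv _ _ *m _); field; rewrite pi0.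
  case=> a [b [ha hb ->]]; exists a, (b * pi ^+ 1); split.
    by apply/hT; split => //; rewrite expr1 mulrC; apply: mMo => //; exact: mpi.
  by rewrite mulmxA /D rv_mul; congr (rv _ _ *m _); ring.
exists t; split => //; rewrite -(gc _ (At_unit t hg)); apply: (cls_of_Lat hL'); last exact: At_unit.
move=> z; rewrite LT Lat_rv; split.
  case=> a [b [/hT [hb hd] ->]]; exists ((a - b * t) / pi), b; split => //; first by apply/m_o.
  by rewrite mulmxA /At rv_mul; congr (rv _ _ *m _); field; rewrite pi0.
case=> a [b [ha hb ->]]; exists (a * pi + b * t), b; split.
  apply/hT; split => //; rewrite addrK mulrC; apply: mMo => //; exact: mpi.
by rewrite mulmxA /At rv_mul; congr (rv _ _ *m _); ring.
Qed.


Definition Pu (e : F) : 'M[F]_2 := mx2 1 e 0 1.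
Definition Lo (e : F) : 'M[F]_2 := mx2 1 0 e 1.

Lemma cls_unimod2 a b c d (P : 'M[F]_2) : [/\ o a, o b, o c & o d] ->
  a * d - b * c != 0 -> o (a * d - b * c)^-1 -> P \in unitmx ->
  cls (mx2 a b c d *m P) = cls P.
Proof.
move=> [ha hb hc hd] h0 hi hP.
apply: (@cls_unimod _ ((a * d - b * c)^-1 *: mx2 d (-b) (-c) a)) => //.
  by apply/intm_mx2.
  by rewrite mx2_scale; apply/intm_mx2; split; apply: oM => //; apply: oN.
rewrite -scalemxAl mx2_mul mx2_scale mx2_1; congr mx2; field => //.
Qed.

Lemma cls_det1 a b c d (P : 'M[F]_2) : [/\ o a, o b, o c & o d] ->
  a * d - b * c = 1 -> P \in unitmx -> cls (mx2 a b c d *m P) = cls P.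
Proof. move=> h e hP; apply: cls_unimod2 => //; rewrite e ?invr1 ?oner_neq0 //; exact: o1. Qed.

Lemma Pu_unit e (P : 'M[F]_2) : P \in unitmx -> Pu e *m P \in unitmx.
Proof. move=> hP; apply: cls_unit_mx2 => //; rewrite mulr1 mulr0 subr0; exact: oner_neq0. Qed.

Lemma Lo_unit e (P : 'M[F]_2) : P \in unitmx -> Lo e *m P \in unitmx.
Proof. move=> hP; apply: cls_unit_mx2 => //; rewrite mulr1 mul0r subr0; exact: oner_neq0. Qed.

Lemma cls_Pu e (P : 'M[F]_2) : o e -> P \in unitmx -> cls (Pu e *m P) = cls P.
Proof. move=> he hP; apply: cls_det1 => //; [split; (exact: o0 || exact: o1 || done)|ring]. Qed.

Lemma cls_Lo e (P : 'M[F]_2) : o e -> P \in unitmx -> cls (Lo e *m P) = cls P.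
Proof. move=> he hP; apply: cls_det1 => //; [split; (exact: o0 || exact: o1 || done)|ring]. Qed.

Lemma cls_eqM1 (M P : 'M[F]_2) : M \in unitmx -> P \in unitmx ->
  cls (M *m P) = cls P ->
  exists c, c != 0 /\ exists U V, [/\ intm U, intm V, 1%:M = U *m (c *: M) & c *: M = V].
Proof.
move=> hM hP e; have := @cls_eqM M 1%:M P hM (unitmx1 _ _) hP; rewrite mul1mx => /(_ e).
case=> c [c0 [U [V [hU hV e1 e2]]]]; exists c; split => //; exists U, V; split => //.
by rewrite mulmx1 in e2.
Qed.

Lemma D_ne n (P : 'M[F]_2) : (1 <= n)%N -> P \in unitmx -> cls (D n *m P) <> cls P.
Proof.
move=> hn hP e; have := cls_eqM1 (D_unit n (unitmx1 _ _)) hP; rewrite mulmx1 => /(_ e).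
case=> c [c0 [U [V [hU hV e1 e2]]]].
move: e1 e2; rewrite (mx2_eta U) /D mx2_scale mx2_mul mx2_1 => /mx2_inj [u00 _ _ u11] eV.
have oc : o c by move: hV; rewrite -eV => /intm_mx2 [+ _ _ _]; rewrite mulr1.
apply: not_opiV.
have -> : pi^-1 = U i1 i1 * c * pi ^+ n.-1.
  have u11' : U i1 i1 * c * pi ^+ n = 1 by rewrite u11; ring.
  clear e u11 eV; case: n hn u11' => // n _; rewrite exprS /= => u11'.
  apply: (mulfI pi0); rewrite mulfV //; rewrite -u11'; ring.
apply: oM; last exact: oX; apply: oM => //; move/intm_mx2: hU; by case.
Qed.

Lemma Lo_eq a b (P : 'M[F]_2) : P \in unitmx -> cls (Lo a *m P) = cls (Lo b *m P) -> o (a - b).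
Proof.
move=> hP e; have := cls_eqM (Lo_unit a (unitmx1 _ _)) (Lo_unit b (unitmx1 _ _)) hP.
rewrite !mulmx1 => /(_ e) [c [c0 [U [V [hU hV e1 e2]]]]].
move: e1 e2; rewrite (mx2_eta U) (mx2_eta V) /Lo !mx2_scale !mx2_mul.
move=> /mx2_inj [u00 u01 u10 u11] /mx2_inj [v00 v01 v10 v11].
have U01 : U i0 i1 = 0.
  by apply: (mulIf c0); rewrite mul0r; move: u01; rewrite mulr0 mulr1 mulr0 add0r.
have Uc : U i0 i0 * c = 1 by rewrite u00 U01; ring.
have Vc : c = V i1 i1 by rewrite -[c]mulr1 v11; ring.
have -> : a - b = U i0 i0 * V i1 i0.
  rewrite -[a - b]mul1r -Uc -mulrA; congr (_ * _).
  have -> : c * (a - b) = c * a - c * b by ring.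
  by rewrite v10 Vc; ring.
by apply: oM.
Qed.



Lemma S0 (g : 'M[F]_2) (y : vertex) : g \in unitmx -> adj (cls g) y ->
  exists Q, [/\ Q \in unitmx, cls Q = cls g & y = cls (D 1 *m Q)].
Proof.
move=> hg /(adj_class hg) [->|[t [ot ->]]]; first by exists g.
have hQ : mx2 t 1 1 0 *m g \in unitmx by apply: cls_unit_mx2 => //; rewrite mulr0 mulr1 sub0r oppr_eq0 oner_neq0.
have o1' : o (-1) by apply: oN; exact: o1.
exists (mx2 t 1 1 0 *m g); split => //.
  apply: cls_unimod2 => //; first by split => //; (exact: o0 || exact: o1).
    by rewrite mulr0 mulr1 sub0r oppr_eq0 oner_neq0.
  by rewrite mulr0 mulr1 sub0r invrN invr1.
rewrite -(@cls_unimod2 0 1 1 0 (D 1 *m (mx2 t 1 1 0 *m g))); last exact: D_unit.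
- by congr cls; rewrite !mulmxA /D /At !mx2_mul; congr (mx2 _ _ _ _ *m _); ring.
- by split => //; (exact: o0 || exact: o1).
- by rewrite mulr0 mulr1 sub0r oppr_eq0 oner_neq0.
- by rewrite mulr0 mulr1 sub0r invrN invr1.
Qed.

Lemma Kstep n (Q : 'M[F]_2) (y : vertex) : (1 <= n)%N -> Q \in unitmx ->
  adj (cls (D n *m Q)) y -> y <> cls (D n.-1 *m Q) ->
  exists s, o s /\ y = cls (D n.+1 *m (Pu (pi ^+ n * s) *m Q)).
Proof.
move=> hn hQ /(adj_class (D_unit n hQ)) [->|[t [ot ->]]] hne.
  exists 0; split; first exact: o0.
  by congr cls; rewrite !mulmxA /D /Pu !mx2_mul; congr (mx2 _ _ _ _ *m _); rewrite ?exprS ?expr1; ring.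
case: n hn hne => // n _ /= hne.
case: (classic (m t)) => mt.
  exfalso; apply: hne.
  have -> : At t *m (D n.+1 *m Q) = pi *: (Lo (t / pi) *m (D n *m Q)).
    rewrite !mulmxA scalemxAl /D /At /Lo !mx2_mul mx2_scale; congr (mx2 _ _ _ _ *m _); rewrite ?exprS; field; by rewrite ?pi0.
  rewrite cls_scale //; last exact: Lo_unit (D_unit n hQ).
  apply: cls_Lo; [exact/m_o|exact: D_unit].
have [t0 oti] := unitP ot mt.
exists t^-1; split => //.
have h1 : [/\ o pi, o (- t^-1), o t & o 0] by split; [exact: opi|exact: oN|done|exact: o0].
have h2 : pi * 0 - - t^-1 * t != 0 by rewrite mulr0 sub0r mulNr opprK mulVf // oner_neq0.
have h3 : o (pi * 0 - - t^-1 * t)^-1 by rewrite mulr0 sub0r mulNr opprK mulVf // invr1; exact: o1.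
rewrite -(cls_unimod2 h1 h2 h3 (D_unit n.+2 (Pu_unit (pi ^+ n.+1 * t^-1) hQ))).
congr cls; rewrite !mulmxA /D /At /Pu !mx2_mul; congr (mx2 _ _ _ _ *m _); rewrite ?exprS; field; by rewrite ?t0 ?pi0.
Qed.


Lemma D0 : D 0 = 1%:M. Proof. by rewrite /D expr0 mx2_1. Qed.
Lemma Pu0 : Pu 0 = 1%:M. Proof. by rewrite /Pu mx2_1. Qed.

Lemma clsY i (Q : 'M[F]_2) s e : o e -> Q \in unitmx ->
  cls (D i *m (Pu (s + pi ^+ i * e) *m Q)) = cls (D i *m (Pu s *m Q)).
Proof.
move=> he hQ; rewrite -(cls_Pu he (D_unit i (Pu_unit s hQ))).
by congr cls; rewrite !mulmxA /D /Pu !mx2_mul; congr (mx2 _ _ _ _ *m _); ring.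
Qed.

Lemma walkF (y : nat -> vertex) N (Q : 'M[F]_2) : (1 <= N)%N -> Q \in unitmx ->
  y 0%N = cls Q -> y 1%N = cls (D 1 *m Q) ->
  (forall i, (i < N)%N -> adj (y i) (y i.+1)) ->
  (forall i, (i.+2 <= N)%N -> y i <> y i.+2) ->
  exists s, o s /\ forall i, (i <= N)%N -> y i = cls (D i *m (Pu s *m Q)).
Proof.
move=> hN hQ y0 y1; elim: N hN => // N IH _ hadj hnb.
case: N IH hadj hnb => [_|N IH] hadj hnb.
  exists 0; split; first exact: o0.
  by case=> [|[|]] // _; rewrite Pu0 mul1mx ?D0 ?mul1mx.
have [s [os hs]] := IH erefl (fun i hi => hadj i (ltnW hi)) (fun i hi => hnb i (leqW hi)).
have hyN : adj (cls (D N.+1 *m (Pu s *m Q))) (y N.+2) by rewrite -hs //; apply: hadj.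
have hne : y N.+2 <> cls (D N.+1.-1 *m (Pu s *m Q)) by rewrite /= -hs //; apply/nesym/hnb.
have [s' [os' e]] := Kstep (ltn0Sn N) (Pu_unit s hQ) hyN hne.
exists (s + pi ^+ N.+1 * s'); split; first by apply: oD => //; apply: oM => //; exact: oX.
move=> i; rewrite leq_eqVlt => /orP [/eqP ->|hi].
  rewrite e; congr (cls (D _ *m _)); rewrite !mulmxA /Pu mx2_mul; congr (mx2 _ _ _ _ *m _); ring.
rewrite hs //.
have -> : pi ^+ N.+1 * s' = pi ^+ i * (pi ^+ (N.+1 - i) * s').
  by rewrite mulrA -exprD subnKC.
by rewrite clsY //; apply: oM => //; exact: oX.
Qed.

Lemma NC (y : nat -> vertex) N : (1 <= N)%N ->
  (forall i, (i < N)%N -> adj (y i) (y i.+1)) ->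
  (forall i, (i.+2 <= N)%N -> y i <> y i.+2) -> y N <> y 0%N.
Proof.
move=> hN hadj hnb.
have [g [hg eg]] := vertex_ex (y 0%N).
have [Q [hQ eQ e1]] := S0 hg (ltac:(rewrite -eg; exact: hadj 0%N hN)).
have [s [os hs]] := walkF hN hQ (etrans eg (esym eQ)) e1 hadj hnb.
rewrite hs // eg -eQ -(cls_Pu os hQ).
exact: D_ne (Pu_unit s hQ).
Qed.


Lemma svalP_cls (P : 'M[F]_2) L : P \in unitmx ->
  sval (cls P) L <-> exists c, c != 0 /\ forall z, L z <-> Lat (c *: P) z.
Proof.
move=> hP; split.
  rewrite cls_val // => -[_ [c [c0 e]]]; exists c; split => // z; by rewrite e scale_Lat.
case=> c [c0 e]; apply: (@sval_ext _ (scale c (Lat P))); first exact: sval_scale (sval_cls hP).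
by move=> z; rewrite e scale_Lat.
Qed.

Lemma adj_sym (x y : vertex) : adj x y -> adj y x.
Proof.
case=> L [L' [w [hL hL' [vw w0] [s1 [z1 [h1 h1']]] [s2 [z2 [h2 h2']]]]]].
exists L', (scale w L), w; split => //.
- exact: sval_scale.
- split.
    by move=> z [y' [hy ->]]; exists y'; split => //; apply: s2.
  exists (w *: z2); split; first by exists z2.
  case=> y' [hy' e]; apply: h2'.
  by have := congr1 (fun u => w^-1 *: u) e; rewrite !scalerA mulVf // !scale1r => ->.
- split; first by move=> z [y' [hy ->]]; apply: s1; exists y'.
  by exists z1.
Qed.

Lemma adj_irr (x : vertex) : ~ adj x x.
Proof.
move=> h; have [g [hg eg]] := vertex_ex x.
have [Q [hQ eQ e1]] := S0 hg (ltac:(rewrite -eg; exact: h)).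
by apply: (D_ne (leqnn 1) hQ); rewrite -e1 eg eQ.
Qed.

Lemma walk0E (x y : vertex) : walk 0 x y -> x = y.
Proof. by move=> h; inversion h. Qed.

Lemma walk1E (x y : vertex) : walk 1 x y -> adj x y.
Proof. move=> h; inversion h; subst; by have <- := walk0E H1. Qed.

Lemma dist1 (x y : vertex) : dist x y 1 <-> adj x y.
Proof.
split; first by case=> /walk1E.
move=> h; split; first by apply: (walkS h); constructor.
case=> // /walk0E e; subst y; case: (adj_irr h).
Qed.

Definition bas (x : vertex) : 'M[F]_2 := proj1_sig (constructive_indefinite_description _ (vertex_ex x)).
Lemma basP x : bas x \in unitmx /\ x = cls (bas x).
Proof. rewrite /bas; case: constructive_indefinite_description => P h //=. Qed.

Definition act (M : 'M[F]_2) (x : vertex) : vertex := cls (bas x *m M).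

Lemma cls_mulr (P P' M : 'M[F]_2) : P \in unitmx -> P' \in unitmx -> M \in unitmx ->
  cls P = cls P' -> cls (P *m M) = cls (P' *m M).
Proof.
move=> hP hP' hM /cls_eqP - /(_ hP hP') [c [c0 [U [V [hU hV e1 e2]]]]].
apply/cls_eqP; rewrite ?unitmx_mul ?hP ?hP' ?hM //.
exists c; split => //; exists U, V; split => //.
  by rewrite e1 scalemxAl mulmxA.
by rewrite scalemxAl e2 mulmxA.
Qed.

Lemma act_cls (M P : 'M[F]_2) : M \in unitmx -> P \in unitmx -> act M (cls P) = cls (P *m M).
Proof.
move=> hM hP; rewrite /act; have [h1 h2] := basP (cls P).
by apply: cls_mulr => //; rewrite -h2.
Qed.

Lemma act_comp (M N : 'M[F]_2) x : M \in unitmx -> N \in unitmx ->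
  act M (act N x) = act (N *m M) x.
Proof.
move=> hM hN; have [h1 h2] := basP x; rewrite h2 !act_cls ?unitmx_mul ?h1 ?hN //.
by rewrite mulmxA.
Qed.

Lemma act1 x : act 1%:M x = x.
Proof. have [h1 h2] := basP x; by rewrite /act mulmx1 -h2. Qed.

Lemma act_inv (M : 'M[F]_2) x : M \in unitmx -> act (invmx M) (act M x) = x.
Proof. move=> hM; by rewrite act_comp ?unitmx_inv // mulmxV // act1. Qed.

Lemma act_inv' (M : 'M[F]_2) x : M \in unitmx -> act M (act (invmx M) x) = x.
Proof. move=> hM; by rewrite act_comp ?unitmx_inv // mulVmx // act1. Qed.

Lemma mat_acts_act (M : 'M[F]_2) x : M \in unitmx -> mat_acts M x (act M x).
Proof.
move=> hM L; have [h1 h2] := basP x; rewrite {1}h2 svalP_cls // => -[c [c0 e]].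
rewrite /act svalP_cls ?unitmx_mul ?h1 //; exists c; split => // z; split.
  case=> y' [/e [u [hu ->]] ->]; exists u; split => //; by rewrite scalemxAl mulmxA.
case=> u [hu ->]; exists (u *m (c *: bas x)); split; first by apply/e; exists u.
by rewrite scalemxAl mulmxA.
Qed.

Lemma act_adj (M : 'M[F]_2) x y : M \in unitmx -> adj x y -> adj (act M x) (act M y).
Proof.
move=> hM [L [L' [w [hL hL' hw [s1 [z1 [h1 h1']]] [s2 [z2 [h2 h2']]]]]]].
have inj : forall a b : vec F, a *m M = b *m M -> a = b.
  by move=> a b e; rewrite -(mulmxK hM a) e mulmxK.
exists (mat_image M L), (mat_image M L'), w; split => //.
- exact: mat_acts_act.
- exact: mat_acts_act.
- split.
    move=> z [y' [[y'' [hy'' ->]] ->]]; exists (w *: y''); split; first by apply: s1; exists y''.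
    by rewrite scalemxAl.
  exists (z1 *m M); split; first by exists z1.
  case=> y' [[y'' [hy'' ->]] e]; apply: h1'; exists y''; split => //.
  by apply: inj; rewrite e scalemxAl.
- split; first by move=> z [y' [hy ->]]; exists y'; split => //; apply: s2.
  exists (z2 *m M); split; first by exists z2.
  by case=> y' [hy' /inj e]; apply: h2'; rewrite e.
Qed.

Lemma act_adjE (M : 'M[F]_2) x y : M \in unitmx -> adj (act M x) (act M y) <-> adj x y.
Proof.
move=> hM; split; last exact: act_adj.
have hMi : invmx M \in unitmx by rewrite unitmx_inv.
by move=> /(act_adj hMi); rewrite !act_inv.
Qed.


Lemma walk_map (f : vertex -> vertex) n x y : (forall a b, adj a b -> adj (f a) (f b)) ->
  walk n x y -> walk n (f x) (f y).
Proof. move=> hf; elim=> {n x y} [x|n x y z hxy _ IH]; [constructor|exact: walkS (hf _ _ hxy) IH]. Qed.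

Lemma is_aut_adj (f : vertex -> vertex) : bijective f ->
  (forall a b, adj a b <-> adj (f a) (f b)) -> is_aut f.
Proof.
move=> bf hf; split => // x y n.
have [g fg gf] := bf.
have hg : forall a b, adj a b -> adj (g a) (g b).
  by move=> a b h; apply/hf; rewrite !gf.
have hw : forall m, walk m x y <-> walk m (f x) (f y).
  move=> m; split; first by apply: walk_map => a b /hf.
  by move=> /(walk_map hg); rewrite !fg.
rewrite /dist; split; case=> h1 h2; split; try exact/hw.
  by move=> m /hw; apply: h2.
by move=> m /hw; apply: h2.
Qed.

Lemma is_aut_comp (f g : vertex -> vertex) : is_aut f -> is_aut g -> is_aut (fun z => f (g z)).
Proof.
case=> bf hf [bg hg]; split; first exact: bij_comp.
by move=> x y n; rewrite hg hf.
Qed.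

Lemma is_aut_adjE (f : vertex -> vertex) a b : is_aut f -> (adj a b <-> adj (f a) (f b)).
Proof. by case=> _ h; rewrite -!dist1 h. Qed.

Lemma is_aut_inj (f : vertex -> vertex) : is_aut f -> injective f.
Proof. by case=> [[g fg _]] _; exact: can_inj fg. Qed.

Lemma act_aut (M : 'M[F]_2) : M \in unitmx -> is_aut (act M).
Proof.
move=> hM; apply: is_aut_adj; first by exists (act (invmx M)) => z; [exact: act_inv|exact: act_inv'].
by move=> a b; rewrite act_adjE.
Qed.

Lemma act_Ghat e (M : 'M[F]_2) : M \in unitmx -> in_Ghat e (act M).
Proof.
move=> hM; split; first exact: act_aut.
by move=> y1 y2 _; exists M; split => // y _; exact: mat_acts_act.
Qed.

Lemma Ghat_act e (M : 'M[F]_2) b : M \in unitmx -> in_Ghat e b -> in_Ghat e (fun z => act M (b z)).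
Proof.
move=> hM [ab hb]; split; first exact: is_aut_comp (act_aut hM) ab.
move=> y1 y2 h; have [g' [hg' hg]] := hb y1 y2 h.
exists (g' *m M); split; first by rewrite unitmx_mul hg' hM.
move=> y hy L hL; have := mat_acts_act hM (hg y hy L hL) => h'.
apply: (sval_ext h') => z; split.
  by case=> z' [[z'' [hz'' ->]] ->]; exists z''; rewrite mulmxA.
by case=> z' [hz' ->]; exists (z' *m g'); split; [exists z'|rewrite mulmxA].
Qed.


Lemma DPu_eq K a b (Q : 'M[F]_2) : Q \in unitmx ->
  cls (D K *m (Pu a *m Q)) = cls (D K *m (Pu b *m Q)) -> o ((a - b) / pi ^+ K).
Proof.
move=> hQ; rewrite !mulmxA => e.
have hu : forall s, D K *m Pu s \in unitmx by move=> s; rewrite -[Pu s]mulmx1; apply: D_unit; apply: Pu_unit; exact: unitmx1.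
have := cls_eqM (hu a) (hu b) hQ e => -[c [c0 [U [V [hU hV e1 e2]]]]].
move: e1 e2; rewrite (mx2_eta U) (mx2_eta V) /D /Pu !mx2_mul !mx2_scale !mx2_mul.
move=> /mx2_inj [u00 u01 u10 u11] /mx2_inj [v00 v01 v10 v11].
have pK : pi ^+ K != 0 by rewrite expf_neq0.
move: u00 u01 u10 u11 v00 v01 v10 v11; rewrite !(mul1r, mul0r, mulr0, mulr1, addr0, add0r) => u00 u01 u10 u11 v00 v01 v10 v11.
have Uc : U i0 i0 * c = 1 by rewrite u00.
have -> : (a - b) / pi ^+ K = U i0 i0 * V i0 i1.
  rewrite -[(a - b) / pi ^+ K]mul1r -Uc -mulrA; congr (_ * _).
  apply: (mulIf pK); rewrite mulrA mulfVK //.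
  have -> : c * (a - b) = c * a - c * b by ring.
  rewrite v01 v00; ring.
by apply: oM; [apply: hU|apply: hV].
Qed.

Hypothesis vC : forall u : nat -> F,
  (forall N : int, exists M : nat, forall i j : nat,
      (M <= i)%N -> (M <= j)%N -> vclose v N (u i) (u j)) ->
  exists l, forall N : int, exists M : nat, forall i : nat,
      (M <= i)%N -> vclose v N (u i) l.

Lemma vclose_mono (N K : int) a b : N <= K -> vclose v K a b -> vclose v N a b.
Proof. rewrite /vclose; move=> h [->|h']; [by left|right; exact: le_trans h h']. Qed.

Lemma ray_coord (y : nat -> vertex) : (forall i, adj (y i) (y i.+1)) -> (forall i, y i <> y i.+2) ->
  exists H, H \in unitmx /\ forall i, y i = cls (D i *m H).
Proof.
move=> hadj hnb.
have [g [hg eg]] := vertex_ex (y 0%N).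
have [Q [hQ eQ e1]] := S0 hg (ltac:(rewrite -eg; exact: hadj 0%N)).
have ex : forall N : nat, exists s, o s /\ forall i, (i <= N.+1)%N -> y i = cls (D i *m (Pu s *m Q)).
  by move=> N; apply: (walkF (ltn0Sn N) hQ (etrans eg (esym eQ)) e1); [move=> i _; apply: hadj|move=> i _; apply: hnb].
pose sg N := proj1_sig (constructive_indefinite_description _ (ex N)).
have sgP : forall N, o (sg N) /\ forall i, (i <= N.+1)%N -> y i = cls (D i *m (Pu (sg N) *m Q)).
  by move=> N; rewrite /sg; case: constructive_indefinite_description.
have cau : forall (K i j : nat), (K <= i)%N -> (K <= j)%N -> vclose v K%:Z (sg i) (sg j).
  move=> K i j hi hj; apply: oXV_vclose; apply: (@DPu_eq K _ _ Q hQ).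
  by rewrite -(proj2 (sgP i)) ?(proj2 (sgP j)) //; apply: leqW.
have [l hl] : exists l, forall N : int, exists M : nat, forall i : nat,
      (M <= i)%N -> vclose v N (sg i) l.
  apply: vC => N; exists `|N|%N => i j hi hj; apply: (vclose_mono _ (cau _ _ _ hi hj)).
  lia.
exists (Pu l *m Q); split; first exact: Pu_unit.
move=> i; have [M hM] := hl i%:Z.
set n := maxn i M.
have hn := hM n (leq_maxr i M).
rewrite (proj2 (sgP n) i); last by apply: leqW; exact: leq_maxl.
have -> : sg n = l + pi ^+ i * ((sg n - l) / pi ^+ i).
  by rewrite mulrC mulfVK ?expf_neq0 // addrC subrK.
by rewrite clsY //; apply: vclose_oXV.
Qed.


Section Ray.
Variable xs : int -> vertex.
Hypothesis hxs : dpath xs.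

Lemma xs_adj (a b : int) : b = a + 1 -> adj (xs a) (xs b).
Proof. by move=> ->; case: (hxs a). Qed.

Lemma xs_adj' (a b : int) : a = b + 1 -> adj (xs a) (xs b).
Proof. by move=> ->; apply: adj_sym; case: (hxs b). Qed.

Lemma xs_nb (a b : int) : b = a + 2 -> xs a <> xs b.
Proof. by move=> ->; case: (hxs a). Qed.

Lemma xs_nb' (a b : int) : a = b + 2 -> xs a <> xs b.
Proof. by move=> -> e; case: (hxs b) => _; apply; rewrite e. Qed.

Lemma xs_seg (j c : int) : j < c -> xs c <> xs j.
Proof.
move=> hjc e.
pose y (i : nat) := xs (j + i%:Z).
have := @NC y `|c - j|%N.
rewrite /y; apply.
- lia.
- move=> i _; apply: xs_adj; lia.
- move=> i _; apply: xs_nb; lia.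
- have -> : j + `|c - j|%N%:Z = c by lia.
  by rewrite e addr0.
Qed.

Lemma ray_unique (j : int) (p : nat -> vertex) : ray p -> p 0%N = xs j ->
  ray_equiv p (end_ray xs) -> forall n : nat, p n = xs (j + n%:Z).
Proof.
move=> hp p0 [a [b hab]].
have key : forall A (c : int), j <= c -> (forall n : nat, p (n + A)%N = xs (n%:Z + c)) ->
    forall n : nat, p n = xs (j + n%:Z).
  elim=> [|A IH] c hjc hA.
    case: (ltP j c) => hc.
      exfalso; apply: (xs_seg hc); by rewrite -p0 -(addn0 0%N) hA add0r.
    have ec : c = j by apply/eqP; rewrite eq_le hc hjc.
    by move=> n; have := hA n; rewrite addn0 ec => ->; rewrite addrC.
  case: (ltP j c) => hc; last first.
    have ec : c = j by apply/eqP; rewrite eq_le hc hjc.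
    exfalso; apply: (@NC p A.+1) => //.
    - by move=> i _; case: (hp i).
    - by move=> i _; case: (hp i).
    - by rewrite -(add0n A.+1) hA add0r ec p0.
  case: (classic (p A = xs (c - 1))) => hpA.
    apply: (IH (c - 1)); first lia.
    case=> [|n]; first by rewrite add0n hpA add0r.
    rewrite addSn -addnS hA; congr xs; lia.
  exfalso.
  pose y (i : nat) := if (i <= A)%N then p i else xs (c - (i%:Z - A.+1%:Z)).
  have yA1 : forall i, (A < i)%N -> y i = xs (c - (i%:Z - A.+1%:Z)).
    by move=> i hi; rewrite /y leqNgt hi.
  have pA1 : p A.+1 = xs c by rewrite -(add0n A.+1) hA add0r.
  apply: (@NC y (A.+1 + `|c - j|)%N) => //.
  - move=> i hi; case: (ltngtP i A) => hiA.
    + rewrite /y (ltnW hiA) hiA; by case: (hp i).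
    + rewrite !yA1 //; last exact: ltnW.
      apply: xs_adj'; lia.
    + rewrite hiA /y leqnn ltnn; case: (hp A) => h _; rewrite pA1 in h.
      rewrite (_ : c - (A.+1%:Z - A.+1%:Z) = c); [exact: h|lia].
  - move=> i hi; case: (ltngtP i.+1 A) => hiA.
    + rewrite /y (ltnW (ltnW hiA)) hiA; by case: (hp i).
    + case: (ltngtP i A) => hiA'.
      * lia.
      * rewrite !yA1 //; try lia.
        by apply: xs_nb'; lia.
      * rewrite hiA' [y A.+2]yA1 // {1}/y leqnn.
        by rewrite (_ : c - (A.+2%:Z - A.+1%:Z) = c - 1) //; lia.
    + have e1 : y i = p i by rewrite /y -hiA leqnSn.
      have e2 : y i.+2 = p i.+2.
        rewrite yA1; last by rewrite -hiA.
        have pA1' := pA1; rewrite -hiA in pA1'; rewrite -hiA pA1'; congr xs; lia.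
      rewrite e1 e2; by case: (hp i).
  - rewrite yA1; last lia.
    rewrite /y leq0n p0; congr xs; lia.
move=> n; apply: (key (a + `|j|)%N (b%:Z + `|j|%:Z)); first lia.
move=> m; rewrite addnA -addnAC hab /end_ray; congr xs; lia.
Qed.
End Ray.


Section Main.
Variable xs : int -> vertex.
Hypothesis hxs : dpath xs.
Variable e : nat.

Lemma xs_ray (j : int) : ray (fun n : nat => xs (j + n%:Z)).
Proof.
move=> n; split; first by apply: (xs_adj hxs); lia.
by apply: (xs_nb hxs); lia.
Qed.

Lemma xs_equiv (j : int) : ray_equiv (fun n : nat => xs (j + n%:Z)) (end_ray xs).
Proof.
exists (absz j), (absz (j + (absz j)%:Z)) => n; rewrite /end_ray; congr xs; lia.
Qed.

Lemma Nk_fix (j : int) g : in_Nk e xs j g -> forall n : nat, g (xs (j + n%:Z)) = xs (j + n%:Z).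
Proof.
case=> _ h n; apply: (h (fun n : nat => xs (j + n%:Z))); [exact: xs_ray| by rewrite addr0| exact: xs_equiv].
Qed.

Lemma fix_ge (j : int) (g : vertex -> vertex) : (forall n : nat, g (xs (j + n%:Z)) = xs (j + n%:Z)) ->
  forall t, j <= t -> g (xs t) = xs t.
Proof. move=> h t ht; have := h (absz (t - j)); by rewrite (_ : j + (absz (t - j))%:Z = t) //; lia. Qed.

Lemma Nk_intro (j : int) g : in_Ghat e g -> (forall n : nat, g (xs (j + n%:Z)) = xs (j + n%:Z)) ->
  in_Nk e xs j g.
Proof.
move=> hg h; have hge := fix_ge h.
split; last first.
  move=> p hp p0 hpe n; rewrite (ray_unique hxs hp p0 hpe); exact: h.
split; last by exists j; apply: hge.
split => //; exists (absz j), (absz j) => n; rewrite /end_ray hge //; lia.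
Qed.

Lemma part1 (k : int) g : in_Nk e xs (k - 1) g -> in_Nk e xs k g.
Proof.
move=> h; have hf := Nk_fix h.
split; first by case: h.
move=> p hp p0 hpe n; rewrite (ray_unique hxs hp p0 hpe).
have := hf n.+1; rewrite (_ : k - 1 + n.+1%:Z = k + n%:Z) //; lia.
Qed.


Variables (q : nat) (r : 'I_q -> F).
Hypothesis r_o : forall i, o (r i).
Hypothesis r_inj : forall i j, m (r i - r j) -> i = j.
Hypothesis r_surj : forall x, o x -> exists i, m (x - r i).

Lemma DLo n s : D n *m Lo s = Lo (pi ^+ n * s) *m D n.
Proof. by rewrite /D /Lo !mx2_mul; congr mx2; ring. Qed.

Lemma part2 (k : int) : has_index (in_Nk e xs k) (in_Nk e xs (k - 1)) q.
Proof.
have [H [hH eH]] := @ray_coord (fun n : nat => xs (k - 1 + n%:Z))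
   (fun i => proj1 (xs_ray (k - 1) i)) (fun i => proj2 (xs_ray (k - 1) i)).
pose N (i : 'I_q) := Lo (r i / pi).
pose M (i : 'I_q) := invmx H *m N i *m H.
have hN : forall i, N i \in unitmx by move=> i; rewrite -[N i]mulmx1; apply: Lo_unit; exact: unitmx1.
have hM : forall i, M i \in unitmx by move=> i; rewrite !unitmx_mul unitmx_inv hH hN.
have HM : forall i, H *m M i = N i *m H by move=> i; rewrite /M !mulmxA mulmxV // mul1mx.
have hDH : forall n, D n *m H \in unitmx by move=> n; exact: D_unit.
have actD : forall i n, act (M i) (cls (D n *m H)) = cls (D n *m (N i *m H)).
  by move=> i n; rewrite act_cls // -mulmxA HM.
have fixk : forall i (n : nat), act (M i) (xs (k + n%:Z)) = xs (k + n%:Z).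
  move=> i n; have := eH n.+1; rewrite (_ : k - 1 + n.+1%:Z = k + n%:Z); last lia.
  move=> ->; rewrite actD mulmxA DLo -mulmxA cls_Lo //.
  have -> : pi ^+ n.+1 * (r i / pi) = pi ^+ n * r i by rewrite exprS; field; rewrite ?pi0.
  apply: oM => //; exact: oX.
have xk1 : xs (k - 1) = cls (H).
  by have := eH 0%N; rewrite addr0 /D expr0 -mx2_1 mul1mx.
have hi0 : forall i, act (M i) (xs (k - 1)) = cls (N i *m H).
  by move=> i; rewrite xk1 act_cls // HM.
have hin : forall i, in_Nk e xs k (act (M i)).
  move=> i; apply: Nk_intro; [exact: act_Ghat|exact: fixk].
exists (fun i => act (M i)); split => //.
move=> b hb; have bfix := Nk_fix hb.
have bfix' := fix_ge bfix.
have [bG bnb] : in_Ghat e b /\ True by split => //; do 3 case: hb => hb _.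
have baut : is_aut b by case: bG.
have xk : xs k = cls (D 1 *m H) by have := eH 1%N; rewrite (_ : k - 1 + 1%:Z = k) //; lia.
have xk2 : xs (k + 1) = cls (D 1 *m (D 1 *m H)).
  have := eH 2%N; rewrite (_ : k - 1 + 2%:Z = k + 1); last lia.
  by move=> ->; rewrite mulmxA /D mx2_mul; congr (cls (mx2 _ _ _ _ *m _)); ring.
have hadj : adj (cls (D 1 *m H)) (b (xs (k - 1))).
  rewrite -xk -(bfix' k (lexx k)); apply: adj_sym; apply/(is_aut_adjE (xs (k - 1)) (xs k) baut).
  by apply: (xs_adj hxs); lia.
have [i hi] : exists i, b (xs (k - 1)) = cls (N i *m H).
  case: (adj_class (hDH 1%N) hadj) => [e2|[t [ot et]]].
    exfalso; rewrite -xk2 -(bfix' (k + 1)) in e2; last lia.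
    by apply: (xs_nb hxs (a := k - 1) (b := k + 1)); [lia|apply: (is_aut_inj baut)].
  have [i hi] := r_surj ot; exists i; rewrite et.
  have -> : At t *m (D 1 *m H) = pi *: (Lo (t / pi) *m H).
    rewrite mulmxA scalemxAl /At /D /Lo mx2_mul mx2_scale; congr (mx2 _ _ _ _ *m _); rewrite ?expr1; field; by rewrite ?pi0.
  rewrite cls_scale //; last by rewrite -[Lo _]mulmx1 -mulmxA mul1mx; apply: Lo_unit.
  have -> : Lo (t / pi) = Lo ((t - r i) / pi) *m N i.
    by rewrite /N /Lo mx2_mul; congr mx2; field; by rewrite ?pi0.
  by rewrite -mulmxA cls_Lo //; [apply/m_o|rewrite -[N i]mulmx1 -mulmxA mul1mx; apply: Lo_unit].
exists i; split.
  exists (fun z => act (invmx (M i)) (b z)); split; last by move=> z; rewrite act_inv'.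
  apply: Nk_intro; first by apply: Ghat_act => //; rewrite unitmx_inv.
  case=> [|n].
    by rewrite addr0 hi -hi0 act_inv.
  rewrite (_ : k - 1 + n.+1%:Z = k + n%:Z); last lia.
  by rewrite bfix -{1}(fixk i n) act_inv.
move=> j [m' [hm' hj]].
have m'fix := Nk_fix hm' 0%N; rewrite addr0 in m'fix.
have : cls (N j *m H) = cls (N i *m H) by rewrite -hi hj m'fix hi0.
move=> /(Lo_eq hH) h; apply: r_inj; apply/m_o.
by rewrite mulrBl.
Qed.

End Main.

End Val.

Theorem mainTheorem15 (F : fieldType) (v : F -> int) (q : nat)
  (hF : is_local_field v q) (e : nat) (he : (1 <= e)%N)
  (xs : int -> vertex v) (hxs : dpath xs) (k : int) :
  (forall g, in_Nk e xs (k - 1) g -> in_Nk e xs k g) /\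
  has_index (in_Nk e xs k) (in_Nk e xs (k - 1)) q.
Proof.
case: hF => vM vU [w [w0 vw]] [r [r_o r_inj r_surj]] vC.
split.
  by move=> g; apply: (part1 vM vU w0 vw hxs).
exact: (part2 vM vU w0 vw vC hxs e r_o r_inj r_surj k).
Qed.
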